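(* Let $\mathbb{K}$ be a field and $f=a_0(x)+a_1(x)y+\cdots+a_n(x)y^n\in\mathbb{K}[x,y]$ with $n\geq 2$, $a_1,\ldots,a_{n-1}\in\mathbb{K}[x]$, $a_0,a_n\in\mathbb{K}$, $a_0a_n\neq 0$, and suppose there exists an index $j$ with $1\leq j\leq n-1$ such that $\deg a_j>\max_{i\neq j}\deg a_i$. Then $f$ is a product of at most $\min\{j,n-j\}$ irreducible polynomials over $\mathbb{K}[x]$. In particular, if $j=1$ or $j=n-1$, then $f$ is irreducible over $\mathbb{K}[x]$.
   Context: $f$ is regarded as a polynomial in $y$ with coefficients in $\mathbb{K}[x]$; ''a product of at most $k$ irreducible polynomials over $\mathbb{K}[x]$'' means that in the factorization of $f$ into irreducible elements of $\mathbb{K}[x][y]$ the number of factors, counted with multiplicities, is at most $k$. *)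

(* Defs.v *)
From HB Require Import structures.
From mathcomp Require Import all_boot all_order all_algebra.
Set Implicit Arguments. Unset Strict Implicit. Unset Printing Implicit Defensive.
Import GRing.Theory.
Local Open Scope ring_scope.

Definition irreducible_elt (R : comUnitRingType) (p : R) : Prop :=
  [/\ p != 0, p \isn't a GRing.unit &
      forall a b : R, p = a * b -> a \is a GRing.unit \/ b \is a GRing.unit].

(* Main.v *)
Require Import Defs.
From HB Require Import structures.
From mathcomp Require Import all_boot all_order all_algebra.
From mathcomp Require Import zify.
From Stdlib Require Import Classical.
Import GRing.Theory.
Local Open Scope ring_scope.

Section Aux.
Variable R : idomainType.
Implicit Types g h : {poly {poly R}}.

Lemma coef_small g h (M l : nat) : (0 < M)%N ->
  (forall j, (j <= l)%N -> (size (g`_j * h`_(l - j)%N)%R < M)%N) ->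
  (size ((g * h)`_l)%R < M)%N.
Proof.
move=> M0 H; rewrite coefM.
apply: (big_ind (fun x : {poly R} => (size x < M)%N)) => //.
- by rewrite size_poly0.
- move=> x y Hx Hy; apply: leq_ltn_trans (size_polyD _ _) _; by rewrite gtn_max Hx Hy.
- by move=> i _; apply: H; rewrite -ltnS.
Qed.

Lemma coef_le g h (M l : nat) :
  (forall j, (j <= l)%N -> (size (g`_j * h`_(l - j)%N)%R <= M)%N) ->
  (size ((g * h)`_l)%R <= M)%N.
Proof.
move=> H; rewrite coefM.
apply: (big_ind (fun x : {poly R} => (size x <= M)%N)) => //.
- by rewrite size_poly0.
- move=> x y Hx Hy; apply: leq_trans (size_polyD _ _) _; by rewrite geq_max Hx Hy.
- by move=> i _; apply: H; rewrite -ltnS.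
Qed.

Lemma coef_exact g h (M l j0 : nat) : (0 < M)%N -> (j0 <= l)%N ->
  size (g`_j0 * h`_(l - j0)%N)%R = M ->
  (forall j, (j <= l)%N -> j != j0 -> (size (g`_j * h`_(l - j)%N)%R < M)%N) ->
  size ((g * h)`_l)%R = M.
Proof.
move=> M0 hj0 E H; rewrite coefM.
have hj : (j0 < l.+1)%N by [].
rewrite (bigD1 (Ordinal hj)) //= size_polyDl E //.
apply: (big_ind (fun x : {poly R} => (size x < M)%N)) => //.
- by rewrite size_poly0.
- move=> x y Hx Hy; apply: leq_ltn_trans (size_polyD _ _) _; by rewrite gtn_max Hx Hy.
- move=> i Hi; apply: H; first by rewrite -ltnS.
  by apply: contra Hi => /eqP Hi; apply/eqP/val_inj.
Qed.


Lemma data g : g != 0 -> exists D lo hi : nat,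
  [/\ (0 < D)%N, size g`_lo = D, size g`_hi = D, (forall i, (size g`_i)%R <= D)%N &
   (forall i, (i < lo)%N -> ((size g`_i)%R < D)%N) /\ (forall i, (hi < i)%N -> ((size g`_i)%R < D)%N)].
Proof.
move=> gn0.
have sg : (0 < size g)%N by rewrite size_poly_gt0.
pose F := fun i : 'I_(size g) => size g`_i.
have [i0 Hi0] := @eq_bigmax _ F (ltac:(by rewrite card_ord)).
set D := \max_i F i in Hi0.
have leD : forall i, ((size g`_i)%R <= D)%N.
  move=> i; case: (ltnP i (size g)) => hi.
    by have := @leq_bigmax _ F (Ordinal hi).
  by rewrite nth_default // size_poly0.
have D0 : (0 < D)%N.
  apply: leq_trans (leD (size g).-1); rewrite size_poly_gt0 -lead_coefE.
  by rewrite lead_coef_eq0.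
have exP : exists i, size g`_i == D by exists i0; rewrite Hi0.
have ubP : forall i, size g`_i == D -> (i <= size g)%N.
  move=> i /eqP Hi; apply: ltnW; rewrite ltnNge; apply/negP => Hn.
  by move: Hi; rewrite nth_default // size_poly0 => E; rewrite -E in D0.
case: (ex_minnP exP) => lo /eqP Hlo Hmin.
case: (ex_maxnP exP ubP) => hi /eqP Hhi Hmax.
exists D, lo, hi; split => //; split.
- move=> i Hi; rewrite ltn_neqAle leD andbT; apply/negP => E.
  by have := Hmin _ E; rewrite leqNgt Hi.
- move=> i Hi; rewrite ltn_neqAle leD andbT; apply/negP => E.
  by have := Hmax _ E; rewrite leqNgt Hi.
Qed.


Definition peak g (k : nat) := forall i, i != k -> ((size g`_i)%R < (size g`_k)%R)%N.

Lemma term_le g h a b : ((size (g`_a * h`_b))%R <= ((size g`_a)%R + (size h`_b)%R).-1)%N.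
Proof. exact: size_polyMleq. Qed.

Lemma peak_mul g h k : g != 0 -> h != 0 -> peak (g * h) k ->
  exists kg kh, [/\ peak g kg, peak h kh & k = kg + kh]%N.
Proof.
move=> gn hn P.
have [Dg [lg [hg [Dg0 Elg Ehg leg [ltlg lthg]]]]] := data g gn.
have [Dh [lh [hh [Dh0 Elh Ehh leh [ltlh lthh]]]]] := data h hn.
pose M := (Dg + Dh).-1.
have leM : forall l, (size ((g * h)`_l)%R <= M)%N.
  move=> l; apply: coef_le => j _; apply: leq_trans (term_le _ _ _ _) _.
  have := leg j; have := leh (l - j)%N; rewrite /M; lia.
have termM : forall a b, (size g`_a)%R = Dg -> (size h`_b)%R = Dh -> (size (g`_a * h`_b))%R = M.
  move=> a b Ea Eb; rewrite size_mul ?Ea ?Eb // -size_poly_gt0 ?Ea ?Eb //.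
have Elo : size ((g * h)`_(lg + lh))%R = M.
  apply: (@coef_exact g h M (lg + lh) lg); rewrite /M; try lia.
    by rewrite addKn termM.
  move=> j Hj Hn; apply: leq_ltn_trans (term_le _ _ _ _) _.
  have := leg j; have := leh (lg + lh - j)%N.
  case: (ltnP j lg) => Hjl.
    have := ltlg _ Hjl; lia.
  have Hl : (lg + lh - j < lh)%N by move: Hn; rewrite neq_ltn; lia.
  have := ltlh _ Hl; lia.
have Ehi : size ((g * h)`_(hg + hh))%R = M.
  apply: (@coef_exact g h M (hg + hh) hg); rewrite /M; try lia.
    by rewrite addKn termM.
  move=> j Hj Hn; apply: leq_ltn_trans (term_le _ _ _ _) _.
  have := leg j; have := leh (hg + hh - j)%N.
  case: (ltnP hg j) => Hjl.
    have := lthg _ Hjl; lia.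
  have Hl : (hh < hg + hh - j)%N by move: Hn; rewrite neq_ltn; lia.
  have := lthh _ Hl; lia.
have E1 : (lg + lh)%N = k.
  apply/eqP; apply/negP => /negP Hn; have := P _ Hn; have := leM k; lia.
have E2 : (hg + hh)%N = k.
  apply/eqP; apply/negP => /negP Hn; have := P _ Hn; have := leM k; lia.
have Lg : (lg <= hg)%N.
  rewrite leqNgt; apply/negP => H; have := ltlg _ H; lia.
have Lh : (lh <= hh)%N.
  rewrite leqNgt; apply/negP => H; have := ltlh _ H; lia.
have Eg : lg = hg by lia.
have Eh : lh = hh by lia.
exists lg, lh; split => //.
- move=> i; rewrite neq_ltn Elg => /orP [H|H]; first exact: ltlg.
  by apply: lthg; rewrite -Eg.
- move=> i; rewrite neq_ltn Elh => /orP [H|H]; first exact: ltlh.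
  by apply: lthh; rewrite -Eh.
Qed.

End Aux.
Arguments peak {R} g k.
Arguments peak_mul {R g h k}.

Lemma unit_const (K : fieldType) (a : {poly {poly K}}) :
  size a = 1%N -> size a`_0 = 1%N -> a \is a GRing.unit.
Proof.
move=> S S0; rewrite poly_unitE S /= poly_unitE S0 /= unitfE.
have : lead_coef a`_0 != 0 by rewrite lead_coef_eq0 -size_poly_eq0 S0.
by rewrite lead_coefE S0.
Qed.

Lemma factor_ok (K : fieldType) (a : {poly {poly K}}) ma ka :
  size a = ma.+1 -> size a`_0 = 1%N -> size a`_ma = 1%N -> peak a ka ->
  a \isn't a GRing.unit -> (0 < ka < ma)%N.
Proof.
move=> S S0 Sm P Nu.
case: (posnP ka) => [k0|kpos].
  subst ka.
  case: (posnP ma) => [m0|mpos].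
    by subst ma; rewrite unit_const in Nu.
  have := P ma; rewrite -lt0n mpos S0 Sm => /(_ isT); by [].
apply/andP; split => //; rewrite ltnNge; apply/negP => H.
have := P 0%N; rewrite eq_sym -lt0n kpos S0 => /(_ isT).
case: (ltngtP ka ma) => [H'|H'|E]; first lia.
  by rewrite nth_default ?size_poly0 // S.
by rewrite E Sm.
Qed.

Arguments factor_ok {K a ma ka}.

Lemma mainlem (K : fieldType) m : forall (g : {poly {poly K}}) k,
  size g = m.+1 -> size g`_0 = 1%N -> size g`_m = 1%N -> (0 < k < m)%N -> peak g k ->
  exists s : seq {poly {poly K}},
    [/\ forall p, p \in s -> irreducible_elt p,
        (size s <= minn k (m - k))%N &
        g = \prod_(p <- s) p].
Proof.
elim/ltn_ind: m => m IH g k Sg S0 Sm Hk P.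
case: (classic (irreducible_elt g)) => Hirr.
  exists [:: g]; split.
  - by move=> p; rewrite inE => /eqP->.
  - rewrite /=; lia.
  - by rewrite big_seq1.
have [a [b [Eab [Na Nb]]]] : exists a b, g = a * b /\ a \isn't a GRing.unit /\ b \isn't a GRing.unit.
  apply: NNPP => H; apply: Hirr; split.
  - by rewrite -size_poly_eq0 Sg.
  - rewrite poly_unitE Sg /=; apply/negP => /andP [H1 _]; move: H1; rewrite eqSS; lia.
  - move=> a b E; apply: NNPP => H2; apply: H; exists a, b; split => //.
    by split; apply/negP => U; apply: H2; [left|right].
have gn0 : g != 0 by rewrite -size_poly_eq0 Sg.
have an0 : a != 0 by apply: contra gn0; rewrite Eab => /eqP->; rewrite mul0r.
have bn0 : b != 0 by apply: contra gn0; rewrite Eab => /eqP->; rewrite mulr0.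
have Pab : peak (a * b) k by rewrite -Eab.
have [ka [kb [Pa Pb Ek]]] := peak_mul an0 bn0 Pab.
have Sa : size a = (size a).-1.+1 by rewrite prednK // size_poly_gt0.
have Sb : size b = (size b).-1.+1 by rewrite prednK // size_poly_gt0.
set ma := (size a).-1 in Sa; set mb := (size b).-1 in Sb.
have Em : m = (ma + mb)%N.
  by move: Sg; rewrite Eab size_mul // Sa Sb addSn addnS /= => [[]].
have two : forall u v : {poly K}, size (u * v) = 1%N -> size u = 1%N /\ size v = 1%N.
  move=> u v E.
  have : u * v != 0 by rewrite -size_poly_eq0 E.
  rewrite mulf_eq0 negb_or => /andP [un vn].
  move: E; rewrite size_mul //.
  have := un; have := vn; rewrite -!size_poly_gt0.
  case: (size u) => [|x]; case: (size v) => [|y] //=; lia.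
have [Sa0 Sb0] : size a`_0 = 1%N /\ size b`_0 = 1%N by apply: two; rewrite -coef0M -Eab.
have [Sam Sbm] : size a`_ma = 1%N /\ size b`_mb = 1%N.
  apply: two.
  have : lead_coef a * lead_coef b = g`_m by rewrite -lead_coefM -Eab lead_coefE Sg.
  by rewrite !lead_coefE Sa Sb /= => ->.
have Ha := factor_ok Sa Sa0 Sam Pa Na.
have Hb := factor_ok Sb Sb0 Sbm Pb Nb.
have [sa [Ia Za Pra]] := IH ma (ltac:(lia)) a ka Sa Sa0 Sam Ha Pa.
have [sb [Ib Zb Prb]] := IH mb (ltac:(lia)) b kb Sb Sb0 Sbm Hb Pb.
exists (sa ++ sb); split.
- by move=> p; rewrite mem_cat => /orP [H|H]; [apply: Ia|apply: Ib].
- rewrite size_cat; lia.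
- by rewrite big_cat /= -Pra -Prb.
Qed.

(* f = \sum_i a_i(x) y^i : {poly {poly K}}, with f`_i = a_i. *)
Theorem theorem6 (K : fieldType) (f : {poly {poly K}}) (n j : nat) :
  (2 <= n)%N ->
  size f = n.+1 ->
  size (f`_0) = 1%N ->
  size (f`_n) = 1%N ->
  (0 < j < n)%N ->
  (forall i : nat, (i <= n)%N -> i != j -> (size (f`_i)%R < size (f`_j)%R)%N) ->
  exists s : seq {poly {poly K}},
    [/\ forall p, p \in s -> irreducible_elt p,
        (size s <= minn j (n - j))%N &
        f = \prod_(p <- s) p].
Proof.
move=> n2 Sf S0 Sn Hj H.
apply: (@mainlem K n f j Sf S0 Sn Hj).
move=> i Hi; case: (leqP i n) => Hin; first exact: H.
have := H 0%N isT; rewrite eq_sym -lt0n; case/andP: Hj => -> _ => /(_ isT).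
move=> Hlt; rewrite nth_default ?Sf // size_poly0; exact: leq_ltn_trans _ Hlt.
Qed.
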